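(* Let $f$ be the map defined in the context. Then: (i) $f$ is continuous at every nega-$Q$-irrational point of $[a_0-1,a_0]$; (ii) if $q_n=q$ for all positive integers $n$, then $f$ is continuous at every point of $[a_0-1,a_0]$ (including all nega-$Q$-rational points); (iii) if $x_0=\Delta^{-Q}_{\varepsilon_1\ldots\varepsilon_{m-1}\varepsilon_m[q_{m+1}-1]0[q_{m+3}-1]0[q_{m+5}-1]\ldots}=\Delta^{-Q}_{\varepsilon_1\ldots\varepsilon_{m-1}[\varepsilon_m-1]0[q_{m+2}-1]0[q_{m+4}-1]0\ldots}$ (with $\varepsilon_m\ge 1$) is a nega-$Q$-rational point and there exists a positive integer $n>m$ with $q_n<q$, then $x_0$ is a point of discontinuity of $f$.
   Context: Let $Q=(q_k)_{k\ge1}$ be a sequence of integers with $q_k\ge 2$, and let $q\ge 2$ be an integer with $q_k\le q$ for all $k$. Put $a_0=\sum_{k\ge1}\frac{q_{2k}-1}{q_1q_2\cdots q_{2k}}$. Every $x\in[a_0-1,a_0]$ can be written as an alternating Cantor series (nega-$Q$-representation) $x=\Delta^{-Q}_{\varepsilon_1\varepsilon_2\ldots}:=\sum_{k\ge1}\frac{(-1)^k\varepsilon_k}{q_1q_2\cdots q_k}$ with digits $\varepsilon_k\in\{0,1,\ldots,q_k-1\}$. A point is called nega-$Q$-rational if it has two representations, namely $\Delta^{-Q}_{\varepsilon_1\ldots\varepsilon_{m-1}\varepsilon_m[q_{m+1}-1]0[q_{m+3}-1]0[q_{m+5}-1]\ldots}=\Delta^{-Q}_{\varepsilon_1\ldots\varepsilon_{m-1}[\varepsilon_m-1]0[q_{m+2}-1]0[q_{m+4}-1]0\ldots}$;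 all other points (nega-$Q$-irrational) have a unique representation. Convention: for nega-$Q$-rational points, only the first of these two representations (the one ending in $\varepsilon_m[q_{m+1}-1]0[q_{m+3}-1]0\ldots$) is used. The nega-$q$-ary representation is $\Delta^{-q}_{\alpha_1\alpha_2\ldots}:=\sum_{k\ge1}\frac{\alpha_k}{(-q)^k}$ with $\alpha_k\in\{0,\ldots,q-1\}$. The map $f:[a_0-1,a_0]\to\mathbb R$ is defined by $f\left(\Delta^{-Q}_{\varepsilon_1\varepsilon_2\ldots}\right)=\Delta^{-q}_{\varepsilon_1\varepsilon_2\ldots}=\sum_{n\ge1}\frac{\varepsilon_n}{(-q)^n}$. *)

(* Defs.v *)
From Stdlib Require Import Reals Lra Lia Arith ClassicalEpsilon.
Open Scope R_scope.

(* A sequence Q = (q_k)_{k>=1} is a function nat -> nat; the value at 0 is unused.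
   Digit sequences eps = (eps_k)_{k>=1} are functions nat -> nat; eps 0 is unused. *)

Fixpoint Qprod (Q : nat -> nat) (n : nat) : R :=
  match n with
  | O => 1
  | S k => Qprod Q k * INR (Q (S k))
  end.

(* The sum of a series sum_{k>=0} u k (chosen by classical choice; it is the
   genuine sum whenever the series converges). *)
Definition series_sum (u : nat -> R) : R :=
  epsilon (inhabits 0) (fun l => infinite_sum u l).

Definition admissible (Q : nat -> nat) (e : nat -> nat) : Prop :=
  forall k, (1 <= k)%nat -> (e k < Q k)%nat.

Definition negaQ_term (Q : nat -> nat) (e : nat -> nat) (k : nat) : R :=
  (-1) ^ k * INR (e k) / Qprod Q k.

Definition negaQ_repr (Q : nat -> nat) (e : nat -> nat) (x : R) : Prop :=
  admissible Q e /\ infinite_sum (fun k => negaQ_term Q e (S k)) x.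

Definition negaQ_value (Q : nat -> nat) (e : nat -> nat) : R :=
  series_sum (fun k => negaQ_term Q e (S k)).

Definition negaq_value (q : nat) (a : nat -> nat) : R :=
  series_sum (fun k => INR (a (S k)) / (- INR q) ^ (S k)).

Definition a0 (Q : nat -> nat) : R :=
  series_sum (fun k => INR (Q (2 * S k) - 1)%nat / Qprod Q (2 * S k)).

Definition in_dom (Q : nat -> nat) (x : R) : Prop := a0 Q - 1 <= x <= a0 Q.

Definition negaQ_rational (Q : nat -> nat) (x : R) : Prop :=
  exists e1 e2, negaQ_repr Q e1 x /\ negaQ_repr Q e2 x /\
    exists k, (1 <= k)%nat /\ e1 k <> e2 k.

(* e is of the second form
     e_1 ... e_{m-1} [e_m - 1] 0 [q_{m+2}-1] 0 [q_{m+4}-1] 0 ...   (m >= 1, 1 <= e_m <= q_m - 1),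
   i.e. digit at m is <= q_m - 2 and afterwards the digits are 0, q_{m+2}-1, 0, q_{m+4}-1, ... *)
Definition second_form (Q : nat -> nat) (e : nat -> nat) : Prop :=
  exists m, (1 <= m)%nat /\ (e m + 1 < Q m)%nat /\
    forall j, (1 <= j)%nat ->
      e (m + 2 * j - 1)%nat = 0%nat /\ e (m + 2 * j)%nat = (Q (m + 2 * j) - 1)%nat.

(* The representation used for x under the convention: the (unique) representation
   that is not of the second form. *)
Definition chosen_repr (Q : nat -> nat) (x : R) : nat -> nat :=
  epsilon (inhabits (fun _ => 0%nat))
    (fun e => negaQ_repr Q e x /\ ~ second_form Q e).

Definition fQ (Q : nat -> nat) (q : nat) (x : R) : R :=
  negaq_value q (chosen_repr Q x).

Definition cont_rel (D : R -> Prop) (g : R -> R) (x0 : R) : Prop :=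
  forall eps, 0 < eps -> exists delta, 0 < delta /\
    forall x, D x -> Rabs (x - x0) < delta -> Rabs (g x - g x0) < eps.

Definition first_form_seq (Q : nat -> nat) (e : nat -> nat) (m : nat) : nat -> nat :=
  fun k => if (k <=? m)%nat then e k
           else if Nat.odd (k - m) then (Q k - 1)%nat else 0%nat.

(* Main.v *)
Require Import Defs.
From Stdlib Require Import Reals Lra Lia Arith ZArith ClassicalEpsilon FunctionalExtensionality.
From Coquelicot Require Import Coquelicot.
Open Scope R_scope.


Definition Qge2 (Q : nat -> nat) := forall k, (1 <= k)%nat -> (2 <= Q k)%nat.
Definition shift (f : nat -> nat) (n : nat) : nat -> nat := fun j => f (n + j)%nat.
Definition V (Q e : nat -> nat) : R := Series (fun k => negaQ_term Q e (S k)).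

Lemma INR_ge2 Q k : Qge2 Q -> (1 <= k)%nat -> 2 <= INR (Q k).
Proof. intros H Hk. specialize (H k Hk). apply le_INR in H. simpl in H. lra. Qed.

Lemma Qge2_shift Q n : Qge2 Q -> Qge2 (shift Q n).
Proof. intros H k Hk. unfold shift. apply H. lia. Qed.

Lemma adm_shift Q e n : admissible Q e -> admissible (shift Q n) (shift e n).
Proof. intros H k Hk. unfold shift. apply H. lia. Qed.

Lemma Qprod_ge Q n : Qge2 Q -> 2 ^ n <= Qprod Q n.
Proof.
  intros H. induction n; simpl. lra.
  pose proof (INR_ge2 Q (S n) H ltac:(lia)).
  assert (0 < 2 ^ n) by (apply pow_lt; lra). nra.
Qed.

Lemma Qprod_pos Q n : Qge2 Q -> 0 < Qprod Q n.
Proof. intros H. pose proof (Qprod_ge Q n H). assert (0 < 2 ^ n) by (apply pow_lt; lra). lra. Qed.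

Lemma Qprod_shift Q n j : Qprod Q (n + j) = Qprod Q n * Qprod (shift Q n) j.
Proof.
  induction j; simpl. rewrite Nat.add_0_r. ring.
  rewrite Nat.add_succ_r. simpl. rewrite IHj. unfold shift. rewrite Nat.add_succ_r. ring.
Qed.

Lemma term_bound Q e k : Qge2 Q -> admissible Q e ->
  Rabs (negaQ_term Q e (S k)) <= (/2) ^ k.
Proof.
  intros H He. unfold negaQ_term.
  rewrite <- Rinv_pow by lra.
  assert (HP := Qprod_pos Q k H). assert (HG := Qprod_ge Q k H).
  assert (HQ := INR_ge2 Q (S k) H ltac:(lia)).
  assert (Hd : INR (e (S k)) <= INR (Q (S k))) by (apply le_INR; specialize (He (S k) ltac:(lia)); lia).
  assert (0 <= INR (e (S k))) by apply pos_INR.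
  simpl Qprod.
  unfold Rdiv. rewrite Rabs_mult, Rabs_mult, pow_1_abs, Rmult_1_l.
  rewrite Rabs_right by lra. rewrite Rabs_right.
  2:{ apply Rle_ge. apply Rlt_le. apply Rinv_0_lt_compat. nra. }
  rewrite Rinv_mult.
  apply Rle_trans with (INR (Q (S k)) * (/ Qprod Q k * / INR (Q (S k)))).
  apply Rmult_le_compat_r; [|lra]. apply Rlt_le. apply Rmult_lt_0_compat; apply Rinv_0_lt_compat; lra.
  replace (INR (Q (S k)) * (/ Qprod Q k * / INR (Q (S k)))) with (/ Qprod Q k) by (field; lra).
  apply Rinv_le_contravar. apply pow_lt; lra. lra.
Qed.

Lemma ex_V Q e : Qge2 Q -> admissible Q e -> ex_series (fun k => negaQ_term Q e (S k)).
Proof.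
  intros H He. apply (@ex_series_le R_AbsRing R_CompleteNormedModule _ (fun k => (/2)^k)).
  intros n. apply term_bound; auto.
  apply ex_series_geom. rewrite Rabs_right; lra.
Qed.

Lemma V_abs Q e : Qge2 Q -> admissible Q e -> Rabs (V Q e) <= 2.
Proof.
  intros H He. unfold V. eapply Rle_trans. apply Series_Rabs.
  apply (@ex_series_le R_AbsRing R_CompleteNormedModule _ (fun k => (/2)^k)). intros n. unfold norm; simpl. unfold abs; simpl.
  rewrite Rabs_Rabsolu. apply term_bound; auto.
  apply ex_series_geom. rewrite Rabs_right; lra.
  eapply Rle_trans. apply Series_le with (b := fun k => (/2)^k).
  intros n; split. apply Rabs_pos. apply term_bound; auto.
  apply ex_series_geom. rewrite Rabs_right; lra.
  rewrite Series_geom. lra. rewrite Rabs_right; lra.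
Qed.


Lemma Series_zero : Series (fun _ => 0) = 0.
Proof.
  rewrite (Series_ext _ (fun n => 0 * 0)) by (intros; ring).
  rewrite (Series_scal_l 0 (fun _ => 0)). ring.
Qed.

Lemma ex_minus (u v : nat -> R) : ex_series u -> ex_series v -> ex_series (fun k => v k - u k).
Proof.
  intros Hu Hv. pose proof (@ex_series_minus R_AbsRing R_NormedModule v u Hv Hu).
  eapply ex_series_ext; [|exact H]. intros n. reflexivity.
Qed.

Lemma Series_le_gen (u v : nat -> R) : ex_series u -> ex_series v ->
  (forall k, u k <= v k) -> Series u <= Series v.
Proof.
  intros Hu Hv H.
  assert (Hw : ex_series (fun k => v k - u k)).
  { apply ex_minus; auto. }
  assert (0 <= Series (fun k => v k - u k)).
  { replace 0 with (Series (fun _ => 0)).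
    apply Series_le. intros; specialize (H n); lra. auto.
    apply Series_zero. }
  rewrite Series_minus in H0; auto. lra.
Qed.

Lemma Series_ge_term (w : nat -> R) j : ex_series w -> (forall k, 0 <= w k) -> w j <= Series w.
Proof.
  intros Hw H.
  destruct j as [|j].
  - rewrite Series_incr_1 by auto.
    assert (0 <= Series (fun k => w (S k))).
    { replace 0 with (Series (fun _ => 0)).
      apply Series_le. intros; split; [lra|auto]. apply (ex_series_incr_1 w) in Hw. auto.
      apply Series_zero. }
    lra.
  - rewrite (Series_incr_n w (S (S j))) by (auto; lia).
    simpl pred.
    assert (0 <= Series (fun k => w (S (S j) + k)%nat)).
    { replace 0 with (Series (fun _ => 0)).
      apply Series_le. intros; split; [lra|auto]. apply (ex_series_incr_n w (S (S j))) in Hw. auto.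
      apply Series_zero. }
    simpl sum_f_R0.
    assert (0 <= sum_f_R0 w j) by (apply cond_pos_sum; auto). lra.
Qed.

Lemma Series_lt_gen (u v : nat -> R) j : ex_series u -> ex_series v ->
  (forall k, u k <= v k) -> u j < v j -> Series u < Series v.
Proof.
  intros Hu Hv H Hj.
  assert (Hw : ex_series (fun k => v k - u k)).
  { apply ex_minus; auto. }
  pose proof (Series_ge_term (fun k => v k - u k) j Hw ltac:(intros k; specialize (H k); lra)).
  simpl in H0. rewrite Series_minus in H0; auto. lra.
Qed.

Lemma V_ext Q e e' : (forall k, (1 <= k)%nat -> e k = e' k) -> V Q e = V Q e'.
Proof.
  intros H. unfold V. apply Series_ext. intros n. unfold negaQ_term. rewrite H by lia. reflexivity.
Qed.

Lemma Qprod_extQ Q Q' n : (forall k, (1 <= k)%nat -> Q k = Q' k) -> Qprod Q n = Qprod Q' n.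
Proof. intros H. induction n; simpl; auto. rewrite IHn, H by lia. reflexivity. Qed.

Lemma V_extQ Q Q' e : (forall k, (1 <= k)%nat -> Q k = Q' k) -> V Q e = V Q' e.
Proof.
  intros H. unfold V. apply Series_ext. intros n. unfold negaQ_term. rewrite (Qprod_extQ Q Q') by auto. reflexivity.
Qed.

Lemma V_step Q e : Qge2 Q -> admissible Q e ->
  V Q e = - (INR (e 1%nat) + V (shift Q 1) (shift e 1)) / INR (Q 1%nat).
Proof.
  intros H He. unfold V. rewrite Series_incr_1 by (apply ex_V; auto).
  assert (HQ := INR_ge2 Q 1 H ltac:(lia)).
  rewrite (Series_ext _ (fun k => (- / INR (Q 1%nat)) * negaQ_term (shift Q 1) (shift e 1) (S k))).
  rewrite Series_scal_l. unfold negaQ_term. simpl Qprod. simpl pow. field. lra.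
  intros n. unfold negaQ_term.
  replace (Qprod Q (S (S n))) with (Qprod Q (1 + S n)) by reflexivity.
  rewrite Qprod_shift. simpl (Qprod Q 1).
  unfold shift at 2. simpl (1 + S n)%nat.
  assert (0 < Qprod (shift Q 1) (S n)) by (apply Qprod_pos, Qge2_shift; auto).
  simpl pow. field. lra.
Qed.

Lemma shift_shift (f : nat -> nat) n : shift (shift f n) 1 = shift f (S n).
Proof. apply functional_extensionality. intros j. unfold shift. f_equal. lia. Qed.

Lemma shift0 (f : nat -> nat) : shift f 0 = f.
Proof. reflexivity. Qed.

Definition T Q e n := V (shift Q n) (shift e n).

Lemma T_step Q e n : Qge2 Q -> admissible Q e ->
  T Q e n = - (INR (e (S n)) + T Q e (S n)) / INR (Q (S n)).
Proof.
  intros H He. unfold T. rewrite V_step by (auto using Qge2_shift, adm_shift).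
  rewrite !shift_shift. unfold shift at 1 4. rewrite Nat.add_1_r. reflexivity.
Qed.

Fixpoint PS Q e n : R :=
  match n with O => 0 | S k => PS Q e k + negaQ_term Q e (S k) end.

Lemma V_tail Q e n : Qge2 Q -> admissible Q e ->
  V Q e = PS Q e n + (-1) ^ n * T Q e n / Qprod Q n.
Proof.
  intros H He. induction n.
  - simpl. unfold T. rewrite !shift0. field.
  - rewrite IHn. rewrite (T_step Q e n) by auto. simpl PS. unfold negaQ_term.
    assert (HQ := INR_ge2 Q (S n) H ltac:(lia)). assert (HP := Qprod_pos Q n H).
    simpl Qprod. simpl pow. field. lra.
Qed.

Lemma PS_ext Q e e' n : (forall k, (1 <= k <= n)%nat -> e k = e' k) -> PS Q e n = PS Q e' n.
Proof.
  induction n; intros H; simpl; auto. rewrite IHn by (intros; apply H; lia).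
  unfold negaQ_term. rewrite H by lia. reflexivity.
Qed.

Lemma V_diff Q e e' n : Qge2 Q -> admissible Q e -> admissible Q e' ->
  (forall k, (1 <= k <= n)%nat -> e k = e' k) ->
  V Q e - V Q e' = (-1) ^ n * (T Q e n - T Q e' n) / Qprod Q n.
Proof.
  intros H He He' Hk. rewrite (V_tail Q e n), (V_tail Q e' n) by auto.
  rewrite (PS_ext Q e e' n Hk). assert (HP := Qprod_pos Q n H). field. lra.
Qed.

Lemma V_diff_abs Q e e' n : Qge2 Q -> admissible Q e -> admissible Q e' ->
  (forall k, (1 <= k <= n)%nat -> e k = e' k) ->
  Rabs (V Q e - V Q e') = Rabs (T Q e n - T Q e' n) / Qprod Q n.
Proof.
  intros H He He' Hk. rewrite (V_diff Q e e' n) by auto. assert (HP := Qprod_pos Q n H).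
  unfold Rdiv. rewrite !Rabs_mult, pow_1_abs, Rmult_1_l. rewrite (Rabs_right (/ _)). reflexivity.
  apply Rle_ge, Rlt_le, Rinv_0_lt_compat; auto.
Qed.


Definition maxp (Q : nat -> nat) k := if Nat.even k then (Q k - 1)%nat else 0%nat.
Definition minp (Q : nat -> nat) k := if Nat.even k then 0%nat else (Q k - 1)%nat.
Definition Bv Q := V Q (maxp Q).
Definition Av Q := - V Q (minp Q).

Lemma neg1_even n : Nat.even n = true -> (-1) ^ n = 1.
Proof.
  intros H. apply Nat.even_spec in H. destruct H as [m ->]. apply pow_1_even.
Qed.

Lemma neg1_odd n : Nat.even n = false -> (-1) ^ n = -1.
Proof.
  intros H. assert (Nat.odd n = true) by (rewrite <- Nat.negb_even, H; reflexivity).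
  apply Nat.odd_spec in H0. destruct H0 as [m ->]. rewrite Nat.add_1_r. apply pow_1_odd.
Qed.

Lemma adm_maxp Q : Qge2 Q -> admissible Q (maxp Q).
Proof. intros H k Hk. specialize (H k Hk). unfold maxp. destruct (Nat.even k); lia. Qed.
Lemma adm_minp Q : Qge2 Q -> admissible Q (minp Q).
Proof. intros H k Hk. specialize (H k Hk). unfold minp. destruct (Nat.even k); lia. Qed.

Lemma INR_pred Q k : Qge2 Q -> (1 <= k)%nat -> INR (Q k - 1) = INR (Q k) - 1.
Proof. intros H Hk. specialize (H k Hk). rewrite minus_INR by lia. reflexivity. Qed.

Lemma term_le_max Q e k : Qge2 Q -> admissible Q e ->
  negaQ_term Q e (S k) <= negaQ_term Q (maxp Q) (S k).
Proof.
  intros H He. unfold negaQ_term, maxp. assert (HP := Qprod_pos Q (S k) H).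
  specialize (He (S k) ltac:(lia)). pose proof (H (S k) ltac:(lia)).
  destruct (Nat.even (S k)) eqn:E.
  - rewrite neg1_even by auto. unfold Rdiv. apply Rmult_le_compat_r. apply Rlt_le, Rinv_0_lt_compat; auto.
    rewrite !Rmult_1_l. apply le_INR. lia.
  - rewrite neg1_odd by auto. simpl INR. unfold Rdiv.
    assert (0 <= INR (e (S k))) by apply pos_INR.
    assert (0 < / Qprod Q (S k)) by (apply Rinv_0_lt_compat; auto). nra.
Qed.

Lemma term_ge_min Q e k : Qge2 Q -> admissible Q e ->
  negaQ_term Q (minp Q) (S k) <= negaQ_term Q e (S k).
Proof.
  intros H He. unfold negaQ_term, minp. assert (HP := Qprod_pos Q (S k) H).
  specialize (He (S k) ltac:(lia)). pose proof (H (S k) ltac:(lia)).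
  assert (0 < / Qprod Q (S k)) by (apply Rinv_0_lt_compat; auto).
  destruct (Nat.even (S k)) eqn:E.
  - rewrite neg1_even by auto. simpl INR. unfold Rdiv.
    assert (0 <= INR (e (S k))) by apply pos_INR. nra.
  - rewrite neg1_odd by auto. unfold Rdiv.
    assert (INR (e (S k)) <= INR (Q (S k) - 1)) by (apply le_INR; lia). nra.
Qed.

Lemma V_le_B Q e : Qge2 Q -> admissible Q e -> V Q e <= Bv Q.
Proof.
  intros H He. unfold Bv, V. apply Series_le_gen; try apply ex_V; auto using adm_maxp.
  intros; apply term_le_max; auto.
Qed.

Lemma V_ge_A Q e : Qge2 Q -> admissible Q e -> - Av Q <= V Q e.
Proof.
  intros H He. unfold Av, V. rewrite Ropp_involutive. apply Series_le_gen; try apply ex_V; auto using adm_minp.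
  intros; apply term_ge_min; auto.
Qed.

Lemma shift_maxp Q : shift (maxp Q) 1 = minp (shift Q 1).
Proof.
  apply functional_extensionality. intros j. unfold shift, maxp, minp.
  simpl (1 + j)%nat. rewrite Nat.even_succ, <- Nat.negb_even. destruct (Nat.even j); reflexivity.
Qed.

Lemma shift_minp Q : shift (minp Q) 1 = maxp (shift Q 1).
Proof.
  apply functional_extensionality. intros j. unfold shift, maxp, minp.
  simpl (1 + j)%nat. rewrite Nat.even_succ, <- Nat.negb_even. destruct (Nat.even j); reflexivity.
Qed.

Lemma Bv_step Q : Qge2 Q -> Bv Q = Av (shift Q 1) / INR (Q 1%nat).
Proof.
  intros H. unfold Bv. rewrite V_step by auto using adm_maxp. rewrite shift_maxp.
  unfold Av. unfold maxp at 1. simpl. assert (HQ := INR_ge2 Q 1 H ltac:(lia)). field. lra.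
Qed.

Lemma Av_step Q : Qge2 Q -> Av Q = (INR (Q 1%nat) - 1 + Bv (shift Q 1)) / INR (Q 1%nat).
Proof.
  intros H. unfold Av. rewrite V_step by auto using adm_minp. rewrite shift_minp.
  unfold Bv. unfold minp at 1. simpl Nat.even. cbv iota. rewrite INR_pred by (auto; lia).
  assert (HQ := INR_ge2 Q 1 H ltac:(lia)). field. lra.
Qed.

Lemma small_pow (eps : R) : 0 < eps -> exists n, / 2 ^ n < eps.
Proof.
  intros He. destruct (archimed (/ eps)) as [H1 _].
  assert (0 <= up (/ eps))%Z.
  { apply le_IZR. assert (0 < / eps) by (apply Rinv_0_lt_compat; auto). simpl. lra. }
  exists (Z.to_nat (up (/ eps))).
  pose proof (Rle_pow_lin 1 (Z.to_nat (up (/eps))) ltac:(lra)).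
  rewrite INR_IZR_INZ, Z2Nat.id in H0 by auto.
  replace (1 + 1) with 2 in H0 by ring.
  assert (0 < / eps) by (apply Rinv_0_lt_compat; auto).
  assert (0 < 2 ^ Z.to_nat (up (/ eps))) by (apply pow_lt; lra).
  apply Rmult_lt_reg_l with (2 ^ Z.to_nat (up (/ eps))); auto.
  rewrite Rinv_r by lra.
  apply Rmult_lt_reg_l with (/ eps); auto.
  replace (/ eps * (2 ^ Z.to_nat (up (/ eps)) * eps)) with (2 ^ Z.to_nat (up (/ eps))) by (field; lra).
  lra.
Qed.

Lemma abs_le_inv x y : Rabs x <= y -> - y <= x <= y.
Proof. unfold Rabs. destruct (Rcase_abs x); lra. Qed.

Lemma AB_small n : forall Q, Qge2 Q -> Rabs (Av Q + Bv Q - 1) <= 5 / 2 ^ n.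
Proof.
  induction n; intros Q H.
  - simpl. unfold Av, Bv.
    pose proof (V_abs Q (minp Q) H (adm_minp Q H)). pose proof (V_abs Q (maxp Q) H (adm_maxp Q H)).
    apply abs_le_inv in H0. apply abs_le_inv in H1. apply Rabs_le. lra.
  - rewrite (Av_step Q H), (Bv_step Q H).
    specialize (IHn (shift Q 1) (Qge2_shift Q 1 H)).
    assert (HQ := INR_ge2 Q 1 H ltac:(lia)).
    replace ((INR (Q 1%nat) - 1 + Bv (shift Q 1)) / INR (Q 1%nat) + Av (shift Q 1) / INR (Q 1%nat) - 1)
      with ((Av (shift Q 1) + Bv (shift Q 1) - 1) / INR (Q 1%nat)) by (field; lra).
    unfold Rdiv at 1. rewrite Rabs_mult. rewrite (Rabs_right (/ _)) by (apply Rle_ge, Rlt_le, Rinv_0_lt_compat; lra).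
    assert (/ INR (Q 1%nat) <= / 2) by (apply Rinv_le_contravar; lra).
    assert (0 < / INR (Q 1%nat)) by (apply Rinv_0_lt_compat; lra).
    pose proof (Rabs_pos (Av (shift Q 1) + Bv (shift Q 1) - 1)).
    replace (5 / 2 ^ S n) with (5 / 2 ^ n * / 2) by (simpl; field; apply pow_nonzero; lra).
    assert (0 <= 5 / 2 ^ n) by (apply Rlt_le, Rdiv_lt_0_compat; [lra| apply pow_lt; lra]).
    apply Rle_trans with (Rabs (Av (shift Q 1) + Bv (shift Q 1) - 1) * / 2).
    apply Rmult_le_compat_l; auto. apply Rmult_le_compat_r; lra.
Qed.

Lemma AB_sum Q : Qge2 Q -> Av Q + Bv Q = 1.
Proof.
  intros H. destruct (Req_dec (Av Q + Bv Q) 1) as [E|E]; auto. exfalso.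
  assert (0 < Rabs (Av Q + Bv Q - 1)) by (apply Rabs_pos_lt; lra).
  destruct (small_pow (Rabs (Av Q + Bv Q - 1) / 5)) as [n Hn]. apply Rdiv_lt_0_compat; lra.
  pose proof (AB_small n Q H).
  assert (0 < 2 ^ n) by (apply pow_lt; lra).
  assert (5 / 2 ^ n < Rabs (Av Q + Bv Q - 1)).
  { unfold Rdiv in *. apply Rmult_lt_reg_r with (/ 5). lra.
    replace (5 * / 2 ^ n * / 5) with (/ 2 ^ n) by (field; lra). lra. }
  lra.
Qed.

Definition As Q n := Av (shift Q n).
Definition Bs Q n := Bv (shift Q n).

Lemma Bs_step Q n : Qge2 Q -> Bs Q n = As Q (S n) / INR (Q (S n)).
Proof.
  intros H. unfold Bs, As. rewrite Bv_step by (apply Qge2_shift; auto). rewrite shift_shift.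
  unfold shift at 2. rewrite Nat.add_1_r. reflexivity.
Qed.

Lemma As_step Q n : Qge2 Q -> As Q n = (INR (Q (S n)) - 1 + Bs Q (S n)) / INR (Q (S n)).
Proof.
  intros H. unfold Bs, As. rewrite Av_step by (apply Qge2_shift; auto). rewrite shift_shift.
  unfold shift at 1 3. rewrite Nat.add_1_r. reflexivity.
Qed.

Lemma ABs_sum Q n : Qge2 Q -> As Q n + Bs Q n = 1.
Proof. intros H. apply AB_sum, Qge2_shift; auto. Qed.

Lemma T_bounds Q e n : Qge2 Q -> admissible Q e -> - As Q n <= T Q e n <= Bs Q n.
Proof.
  intros H He. unfold T, As, Bs. split.
  apply V_ge_A; auto using Qge2_shift, adm_shift.
  apply V_le_B; auto using Qge2_shift, adm_shift.
Qed.

Lemma T_maxp Q e n : (forall j, (1 <= j)%nat -> e (n + j)%nat = maxp (shift Q n) j) -> T Q e n = Bs Q n.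
Proof. intros H. unfold T, Bs, Bv. apply V_ext. intros k Hk. change (shift e n k) with (e (n + k)%nat). auto. Qed.

Lemma T_minp Q e n : (forall j, (1 <= j)%nat -> e (n + j)%nat = minp (shift Q n) j) -> T Q e n = - As Q n.
Proof. intros H. unfold T, As, Av. rewrite Ropp_involutive. apply V_ext. intros k Hk. change (shift e n k) with (e (n + k)%nat). auto. Qed.


Lemma series_sum_eq u l : is_series u l -> series_sum u = l.
Proof.
  intros H. unfold series_sum.
  pose proof (epsilon_spec (inhabits 0) (fun l => infinite_sum u l) (ex_intro _ l (proj1 (is_series_Reals u l) H))) as H1.
  simpl in H1. apply is_series_Reals in H1.
  apply is_series_unique in H. apply is_series_unique in H1. congruence.
Qed.

Lemma negaQ_value_eq Q e : Qge2 Q -> admissible Q e -> negaQ_value Q e = V Q e.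
Proof. intros H He. unfold negaQ_value, V. apply series_sum_eq, Series_correct, ex_V; auto. Qed.

Lemma repr_iff Q e x : Qge2 Q -> (negaQ_repr Q e x <-> admissible Q e /\ V Q e = x).
Proof.
  intros H. split.
  - intros [He Hs]. split; auto. apply is_series_Reals in Hs. apply is_series_unique in Hs. exact Hs.
  - intros [He Hv]. split; auto. apply is_series_Reals. rewrite <- Hv. apply Series_correct, ex_V; auto.
Qed.

Lemma a0_eq Q : Qge2 Q -> a0 Q = Bv Q.
Proof.
  intros H. unfold a0. apply series_sum_eq.
  set (b := fun k => negaQ_term Q (maxp Q) (S k)).
  assert (Hb : is_series b (Bv Q)) by (apply Series_correct, ex_V; auto using adm_maxp).
  set (c := fun k => INR (Q (2 * S k) - 1)%nat / Qprod Q (2 * S k)).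
  assert (Heq0 : forall i, sum_f_R0 c i = sum_f_R0 b (2 * i + 1)).
  { induction i.
    - simpl. unfold b, c, negaQ_term, maxp. simpl Nat.even. cbv iota.
      simpl (INR 0). simpl pow. change (2 * 1)%nat with 2%nat.
      pose proof (Qprod_pos Q 2 H). pose proof (Qprod_pos Q 1 H). field. lra.
    - rewrite tech5, IHi. replace (2 * S i + 1)%nat with (S (S (2 * i + 1))) by lia.
      rewrite (tech5 b (S (2 * i + 1))), (tech5 b (2 * i + 1)).
      unfold b, c, negaQ_term, maxp.
      replace (S (S (S (2 * i + 1)))) with (2 * S (S i))%nat by lia.
      replace (S (S (2 * i + 1))) with (S (2 * S i))%nat by lia.
      assert (E1 : Nat.even (2 * S (S i)) = true) by (rewrite Nat.even_mul; reflexivity).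
      assert (E2 : Nat.even (S (2 * S i)) = false) by (rewrite Nat.even_succ, <- Nat.negb_even, Nat.even_mul; reflexivity).
      rewrite E1, E2. rewrite (neg1_even _ E1). simpl (INR 0).
      pose proof (Qprod_pos Q (S (2 * S i)) H). pose proof (Qprod_pos Q (2 * S (S i)) H). field. lra. }
  assert (Heq : forall i, sum_n c i = sum_n b (2 * i + 1)).
  { intros i. rewrite !sum_n_Reals. apply Heq0. }
  unfold is_series.
  change (is_lim_seq (sum_n c) (Bv Q)).
  apply (is_lim_seq_ext (fun i => sum_n b (2 * i + 1))). intros; rewrite Heq; auto.
  apply (is_lim_seq_subseq (sum_n b) (Bv Q) (fun i => 2 * i + 1)%nat).
  apply eventually_subseq. intros; lia. exact Hb.
Qed.

Lemma dom_iff Q x : Qge2 Q -> (in_dom Q x <-> - Av Q <= x <= Bv Q).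
Proof.
  intros H. unfold in_dom. rewrite a0_eq by auto. pose proof (AB_sum Q H). split; intros; lra.
Qed.

Lemma V_in_dom Q e : Qge2 Q -> admissible Q e -> in_dom Q (V Q e).
Proof. intros H He. apply dom_iff; auto. split; [apply V_ge_A|apply V_le_B]; auto. Qed.

Definition cq (q : nat) : nat -> nat := fun _ => q.

Lemma Qge2_cq q : (2 <= q)%nat -> Qge2 (cq q).
Proof. intros H k _. exact H. Qed.

Lemma negaq_eq q a : (2 <= q)%nat -> admissible (cq q) a -> negaq_value q a = V (cq q) a.
Proof.
  intros Hq Ha. unfold negaq_value. apply series_sum_eq.
  apply (is_series_ext (fun k => negaQ_term (cq q) a (S k))).
  2:{ apply Series_correct, ex_V; auto using Qge2_cq. }
  intros n. unfold negaQ_term.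
  assert (Hp : forall m, Qprod (cq q) m = INR q ^ m).
  { induction m; simpl; auto. rewrite IHm. unfold cq. ring. }
  rewrite Hp. assert (0 < INR q) by (apply lt_0_INR; lia).
  replace (- INR q) with ((-1) * INR q) by ring. rewrite Rpow_mult_distr.
  assert (0 < INR q ^ S n) by (apply pow_lt; auto).
  assert ((-1) ^ S n * (-1) ^ S n = 1). { rewrite <- Rpow_mult_distr. replace (-1 * -1) with 1 by ring. apply pow1. }
  assert ((-1) ^ S n <> 0) by (apply pow_nonzero; lra).
  match goal with |- ?x = ?y => change (@eq R x y) end.
  rewrite <- (Rmult_1_l (INR (a (S n)))) at 2. rewrite <- H1. field. split; lra.
Qed.


Lemma DIG n : (1 <= n)%nat -> forall A' B' z, A' + B' = 1 -> - A' <= z <= INR n - 1 + B' ->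
  exists d, (d < n)%nat /\ - A' <= z - INR d <= B' /\ ((d + 1 < n)%nat -> z - INR d < B').
Proof.
  induction n as [|n IH]; intros Hn A' B' z HAB Hz. lia.
  destruct (Nat.eq_dec n 0) as [->|Hn0].
  - exists 0%nat. simpl in *. split; [lia|]. split; [lra|]. intros; lia.
  - destruct (Rle_dec (- A') (z - INR n)) as [Hle|Hlt].
    + exists n. split; [lia|]. rewrite S_INR in Hz. split; [lra|]. intros; lia.
    + destruct (IH ltac:(lia) A' B' z HAB) as [d [Hd1 [Hd2 Hd3]]].
      { rewrite S_INR in Hz. split; lra. }
      exists d. split; [lia|]. split; auto. intros Hd.
      destruct (Nat.eq_dec (d + 1) n) as [E|E].
      * assert (INR d = INR n - 1) by (rewrite <- E, plus_INR; simpl; ring). lra.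
      * apply Hd3. lia.
Qed.

Lemma zero_of_small a C : (forall n, Rabs a <= C / 2 ^ n) -> a = 0.
Proof.
  intros H. destruct (Req_dec a 0) as [E|E]; auto. exfalso.
  assert (Ha : 0 < Rabs a) by (apply Rabs_pos_lt; auto).
  pose proof (H 0%nat). simpl in H0. assert (0 < C) by lra.
  destruct (small_pow (Rabs a / C)) as [n Hn]. apply Rdiv_lt_0_compat; lra.
  pose proof (H n). assert (0 < 2 ^ n) by (apply pow_lt; lra).
  assert (C / 2 ^ n < Rabs a).
  { unfold Rdiv in *. apply Rmult_lt_reg_r with (/ C). apply Rinv_0_lt_compat; lra.
    replace (C * / 2 ^ n * / C) with (/ 2 ^ n) by (field; lra). lra. }
  lra.
Qed.

Section Ex.
Variable Q : nat -> nat.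
Hypothesis HQ : Qge2 Q.
Variable x : R.
Hypothesis Hx : - Av Q <= x <= Bv Q.

Definition digP k t d := (d < Q (S k))%nat /\ - As Q (S k) <= - INR (Q (S k)) * t - INR d <= Bs Q (S k) /\
  ((d + 1 < Q (S k))%nat -> - INR (Q (S k)) * t - INR d < Bs Q (S k)).

Definition dig k t := epsilon (inhabits 0%nat) (digP k t).

Fixpoint st n : R := match n with O => x | S k => - INR (Q (S k)) * st k - INR (dig k (st k)) end.

Definition exd k := match k with O => 0%nat | S k' => dig k' (st k') end.

Lemma st_inv n : - As Q n <= st n <= Bs Q n /\ (n > 0 -> digP (pred n) (st (pred n)) (exd n))%nat.
Proof.
  induction n as [|n [IH _]].
  - split; [exact Hx|]. intros; lia.
  - assert (Hd : digP n (st n) (dig n (st n))).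
    { unfold dig. apply epsilon_spec.
      rewrite (Bs_step Q n HQ) in IH. rewrite (As_step Q n HQ) in IH.
      assert (Hq := INR_ge2 Q (S n) HQ ltac:(lia)).
      destruct (DIG (Q (S n)) ltac:(specialize (HQ (S n)); lia) (As Q (S n)) (Bs Q (S n)) (- INR (Q (S n)) * st n)
        (ABs_sum Q (S n) HQ)) as [d Hd].
      { destruct IH as [IH1 IH2]. split.
        - apply Rmult_le_compat_l with (r := INR (Q (S n))) in IH2; [|lra].
          replace (INR (Q (S n)) * (As Q (S n) / INR (Q (S n)))) with (As Q (S n)) in IH2 by (field; lra). lra.
        - apply Rmult_le_compat_l with (r := INR (Q (S n))) in IH1; [|lra].
          replace (INR (Q (S n)) * - ((INR (Q (S n)) - 1 + Bs Q (S n)) / INR (Q (S n))))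
            with (- (INR (Q (S n)) - 1 + Bs Q (S n))) in IH1 by (field; lra). lra. }
      exists d. exact Hd. }
    split.
    + destruct Hd as [_ [H2 _]]. simpl st. exact H2.
    + intros _. exact Hd.
Qed.

Lemma exd_adm : admissible Q exd.
Proof.
  intros k Hk. destruct k as [|k]. lia.
  destruct (st_inv (S k)) as [_ H]. destruct (H ltac:(lia)) as [H1 _]. exact H1.
Qed.

Lemma st_repr n : x = PS Q exd n + (-1) ^ n * st n / Qprod Q n.
Proof.
  induction n.
  - simpl. field.
  - rewrite IHn. simpl PS. simpl st. unfold negaQ_term. simpl exd.
    assert (HQ1 := INR_ge2 Q (S n) HQ ltac:(lia)). assert (HP := Qprod_pos Q n HQ).
    simpl Qprod. simpl pow. field. lra.
Qed.

Lemma abs_le_2 a b c : -2 <= a <= 2 -> -2 <= b <= 2 -> - a <= c <= b -> Rabs c <= 2.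
Proof. intros. apply Rabs_le. lra. Qed.

Lemma As_abs n : - 2 <= As Q n <= 2.
Proof.
  unfold As, Av. pose proof (V_abs (shift Q n) (minp (shift Q n)) (Qge2_shift Q n HQ) (adm_minp _ (Qge2_shift Q n HQ))).
  apply abs_le_inv in H. lra.
Qed.
Lemma Bs_abs n : - 2 <= Bs Q n <= 2.
Proof.
  unfold Bs, Bv. pose proof (V_abs (shift Q n) (maxp (shift Q n)) (Qge2_shift Q n HQ) (adm_maxp _ (Qge2_shift Q n HQ))).
  apply abs_le_inv in H. lra.
Qed.

Lemma exd_val : V Q exd = x.
Proof.
  apply Rminus_diag_uniq. apply (zero_of_small _ 4). intros n.
  rewrite (V_tail Q exd n HQ exd_adm). rewrite (st_repr n) at 1.
  replace (PS Q exd n + (-1) ^ n * T Q exd n / Qprod Q n - (PS Q exd n + (-1) ^ n * st n / Qprod Q n))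
    with ((-1) ^ n * (T Q exd n - st n) / Qprod Q n) by (field; apply Rgt_not_eq, Qprod_pos; auto).
  assert (HP := Qprod_pos Q n HQ). assert (HG := Qprod_ge Q n HQ).
  assert (H2 : 0 < 2 ^ n) by (apply pow_lt; lra).
  unfold Rdiv. rewrite !Rabs_mult, pow_1_abs, Rmult_1_l.
  rewrite (Rabs_right (/ _)) by (apply Rle_ge, Rlt_le, Rinv_0_lt_compat; auto).
  assert (Rabs (T Q exd n - st n) <= 4).
  { pose proof (T_bounds Q exd n HQ exd_adm). pose proof (proj1 (st_inv n)).
    pose proof (As_abs n). pose proof (Bs_abs n). apply Rabs_le. lra. }
  apply Rle_trans with (4 * / Qprod Q n).
  apply Rmult_le_compat_r; auto. apply Rlt_le, Rinv_0_lt_compat; auto.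
  apply Rmult_le_compat_l. lra. apply Rinv_le_contravar; auto.
Qed.

Lemma exd_not_second : ~ second_form Q exd.
Proof.
  intros [m [Hm [Hdig Hpat]]].
  assert (HT : T Q exd m = Bs Q m).
  { apply T_maxp. intros j Hj. unfold maxp, shift.
    destruct (Nat.even j) eqn:E.
    - apply Nat.even_spec in E. destruct E as [i ->].
      destruct (Hpat i ltac:(lia)) as [_ H2]. exact H2.
    - assert (Nat.odd j = true) by (rewrite <- Nat.negb_even, E; reflexivity).
      apply Nat.odd_spec in H. destruct H as [i ->].
      destruct (Hpat (S i) ltac:(lia)) as [H1 _].
      replace (m + (2 * i + 1))%nat with (m + 2 * S i - 1)%nat by lia. exact H1. }
  assert (Hst : st m = T Q exd m).
  { pose proof (st_repr m). rewrite <- exd_val in H at 1. rewrite (V_tail Q exd m HQ exd_adm) in H.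
    assert (HP := Qprod_pos Q m HQ). assert ((-1) ^ m <> 0) by (apply pow_nonzero; lra).
    apply Rplus_eq_reg_l in H. unfold Rdiv in H.
    apply Rmult_eq_reg_r in H. apply Rmult_eq_reg_l in H; auto. apply Rinv_neq_0_compat; lra. }
  destruct m as [|k]. lia.
  destruct (st_inv (S k)) as [_ H]. destruct (H ltac:(lia)) as [_ [_ H3]].
  simpl pred in H3. specialize (H3 Hdig). simpl st in Hst. rewrite HT in Hst.
  simpl exd in H3. lra.
Qed.

End Ex.

Lemma existence Q x : Qge2 Q -> in_dom Q x -> exists e, negaQ_repr Q e x /\ ~ second_form Q e.
Proof.
  intros HQ Hx. apply dom_iff in Hx; auto.
  exists (exd Q x). split.
  - apply repr_iff; auto. split. apply exd_adm; auto. apply exd_val; auto.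
  - apply exd_not_second; auto.
Qed.

Lemma chosen_ok Q x : Qge2 Q -> in_dom Q x -> admissible Q (chosen_repr Q x) /\ V Q (chosen_repr Q x) = x.
Proof.
  intros HQ Hx. unfold chosen_repr.
  destruct (existence Q x HQ Hx) as [e He].
  pose proof (epsilon_spec (inhabits (fun _ => 0%nat)) (fun e => negaQ_repr Q e x /\ ~ second_form Q e) (ex_intro _ e He)) as [H1 _].
  apply repr_iff in H1; auto.
Qed.


Lemma T_eq Q e n : Qge2 Q -> admissible Q e ->
  INR (Q (S n)) * T Q e n = - (INR (e (S n)) + T Q e (S n)).
Proof.
  intros H He. rewrite (T_step Q e n H He). assert (HQ := INR_ge2 Q (S n) H ltac:(lia)). field. lra.
Qed.

Lemma Bs_eq Q n : Qge2 Q -> INR (Q (S n)) * Bs Q n = As Q (S n).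
Proof. intros H. rewrite (Bs_step Q n H). assert (HQ := INR_ge2 Q (S n) H ltac:(lia)). field. lra. Qed.

Lemma As_eq Q n : Qge2 Q -> INR (Q (S n)) * As Q n = INR (Q (S n)) - 1 + Bs Q (S n).
Proof. intros H. rewrite (As_step Q n H). assert (HQ := INR_ge2 Q (S n) H ltac:(lia)). field. lra. Qed.

Lemma CLOSE Q e e' N : Qge2 Q -> admissible Q e -> admissible Q e' ->
  (forall k, (1 <= k <= N)%nat -> e k = e' k) -> Rabs (V Q e - V Q e') <= / 2 ^ N.
Proof.
  intros H He He' Hk. rewrite (V_diff_abs Q e e' N) by auto.
  pose proof (T_bounds Q e N H He). pose proof (T_bounds Q e' N H He'). pose proof (ABs_sum Q N H).
  assert (Rabs (T Q e N - T Q e' N) <= 1) by (apply Rabs_le; lra).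
  assert (HP := Qprod_pos Q N H). assert (HG := Qprod_ge Q N H). assert (0 < 2 ^ N) by (apply pow_lt; lra).
  unfold Rdiv. apply Rle_trans with (1 * / Qprod Q N).
  apply Rmult_le_compat_r; auto. apply Rlt_le, Rinv_0_lt_compat; auto.
  rewrite Rmult_1_l. apply Rinv_le_contravar; auto.
Qed.

Lemma adm_cq Q q e : (forall k, (1 <= k)%nat -> (Q k <= q)%nat) -> admissible Q e -> admissible (cq q) e.
Proof. intros H He k Hk. unfold cq. specialize (H k Hk). specialize (He k Hk). lia. Qed.

Lemma interior_down Q g N : Qge2 Q -> admissible Q g -> - As Q N < T Q g N < Bs Q N ->
  forall k, (k <= N)%nat -> - As Q k < T Q g k < Bs Q k.
Proof.
  intros H Hg HN.
  assert (forall i k, (k + i = N)%nat -> - As Q k < T Q g k < Bs Q k).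
  { induction i; intros k Hk.
    - rewrite Nat.add_0_r in Hk. subst. auto.
    - specialize (IHi (S k) ltac:(lia)).
      pose proof (T_eq Q g k H Hg). pose proof (Bs_eq Q k H). pose proof (As_eq Q k H).
      assert (HQ := INR_ge2 Q (S k) H ltac:(lia)).
      assert (Hd : INR (g (S k)) <= INR (Q (S k)) - 1).
      { specialize (Hg (S k) ltac:(lia)). rewrite <- INR_pred by (auto; lia). apply le_INR. lia. }
      assert (0 <= INR (g (S k))) by apply pos_INR.
      split.
      + apply Rmult_lt_reg_l with (INR (Q (S k))). lra. lra.
      + apply Rmult_lt_reg_l with (INR (Q (S k))). lra. lra. }
  intros k Hk. apply (H0 (N - k)%nat). lia.
Qed.

Lemma forced_prefix Q g e'' N : Qge2 Q -> admissible Q g -> admissible Q e'' ->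
  (forall k, (k <= N)%nat -> - As Q k < T Q g k < Bs Q k) ->
  V Q e'' = V Q g -> forall j, (1 <= j <= N)%nat -> e'' j = g j.
Proof.
  intros H Hg He Hint Hv.
  assert (forall k, (k <= N)%nat -> forall j, (1 <= j <= k)%nat -> e'' j = g j).
  { induction k; intros Hk j Hj. lia.
    destruct (Nat.eq_dec j (S k)) as [->|Hne]; [|apply IHk; lia].
    specialize (IHk ltac:(lia)).
    pose proof (V_diff Q g e'' k H Hg He ltac:(intros; symmetry; apply IHk; lia)).
    rewrite Hv in H0. rewrite Rminus_diag_eq in H0 by auto.
    assert (HP := Qprod_pos Q k H). assert ((-1) ^ k <> 0) by (apply pow_nonzero; lra).
    assert (HTT : T Q g k = T Q e'' k).
    { symmetry in H0. unfold Rdiv in H0. apply Rmult_integral in H0. destruct H0 as [H0|H0].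
      apply Rmult_integral in H0. destruct H0; [contradiction|lra].
      exfalso. apply Rinv_neq_0_compat in H0; auto. lra. }
    pose proof (T_eq Q g k H Hg). pose proof (T_eq Q e'' k H He).
    rewrite HTT in H2. rewrite H2 in H3.
    pose proof (Hint (S k) Hk). pose proof (T_bounds Q e'' (S k) H He). pose proof (ABs_sum Q (S k) H).
    destruct (lt_eq_lt_dec (e'' (S k)) (g (S k))) as [[Hl|Heq]|Hl]; auto.
    - exfalso.
      assert (INR (e'' (S k)) + 1 <= INR (g (S k))) by (rewrite <- S_INR; apply le_INR; lia).
      lra.
    - exfalso. assert (INR (g (S k)) + 1 <= INR (e'' (S k))) by (rewrite <- S_INR; apply le_INR; lia).
      lra. }
  intros j Hj. apply (H0 N (le_n N)). auto.
Qed.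

Definition trunc (s : nat -> nat) N : nat -> nat := fun k => if (k <=? N)%nat then s k else 0%nat.

Lemma trunc_adm Q s N : Qge2 Q -> admissible Q s -> admissible Q (trunc s N).
Proof. intros H Hs k Hk. unfold trunc. destruct (k <=? N)%nat; auto. specialize (H k Hk). lia. Qed.

Lemma trunc_interior Q s N : Qge2 Q -> admissible Q s -> - As Q N < T Q (trunc s N) N < Bs Q N.
Proof.
  intros H Hs. set (g := trunc s N). assert (Hg : admissible Q g) by (apply trunc_adm; auto).
  pose proof (T_eq Q g N H Hg). pose proof (T_eq Q g (S N) H Hg).
  assert (E1 : g (S N) = 0%nat) by (unfold g, trunc; destruct (Nat.leb_spec (S N) N); [lia|auto]).
  assert (E2 : g (S (S N)) = 0%nat) by (unfold g, trunc; destruct (Nat.leb_spec (S (S N)) N); [lia|auto]).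
  rewrite E1 in H0. rewrite E2 in H1. simpl INR in H0, H1.
  pose proof (T_bounds Q g (S (S N)) H Hg).
  pose proof (Bs_eq Q N H). pose proof (As_eq Q N H). pose proof (Bs_eq Q (S N) H). pose proof (As_eq Q (S N) H).
  assert (Ha := INR_ge2 Q (S N) H ltac:(lia)). assert (Hb := INR_ge2 Q (S (S N)) H ltac:(lia)).
  set (a := INR (Q (S N))) in *. set (b := INR (Q (S (S N)))) in *.
  set (t0 := T Q g N) in *. set (t1 := T Q g (S N)) in *. set (t2 := T Q g (S (S N))) in *.
  pose proof (ABs_sum Q (S (S N)) H).
  assert (Hu : - t1 < As Q (S N)).
  { apply Rmult_lt_reg_l with b. lra. nra. }
  assert (Hl : t1 < a - 1 + Bs Q (S N)).
  { apply Rmult_lt_reg_l with b. lra. nra. }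
  split.
  - apply Rmult_lt_reg_l with a. lra. lra.
  - apply Rmult_lt_reg_l with a. lra. lra.
Qed.


Lemma fQ_eq Q q y : Qge2 Q -> (2 <= q)%nat -> (forall k, (1 <= k)%nat -> (Q k <= q)%nat) -> in_dom Q y ->
  fQ Q q y = V (cq q) (chosen_repr Q y).
Proof.
  intros H Hq Hle Hy. unfold fQ. destruct (chosen_ok Q y H Hy) as [Ha _].
  apply negaq_eq; auto. apply (adm_cq Q); auto.
Qed.

Lemma SIDE Q q s N : Qge2 Q -> (2 <= q)%nat -> (forall k, (1 <= k)%nat -> (Q k <= q)%nat) ->
  admissible Q s ->
  Rabs (V Q (trunc s N) - V Q s) <= / 2 ^ N /\
  Rabs (fQ Q q (V Q (trunc s N)) - V (cq q) s) <= / 2 ^ N.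
Proof.
  intros H Hq Hle Hs. set (g := trunc s N).
  assert (Hg : admissible Q g) by (apply trunc_adm; auto).
  assert (Hgs : forall k, (1 <= k <= N)%nat -> g k = s k).
  { intros k Hk. unfold g, trunc. destruct (Nat.leb_spec k N); auto; lia. }
  split. apply CLOSE; auto.
  assert (Hy : in_dom Q (V Q g)) by (apply V_in_dom; auto).
  rewrite fQ_eq by auto.
  destruct (chosen_ok Q (V Q g) H Hy) as [Hc Hcv].
  assert (Hpre := forced_prefix Q g (chosen_repr Q (V Q g)) N H Hg Hc
    (interior_down Q g N H Hg (trunc_interior Q s N H Hs)) Hcv).
  apply CLOSE.
  apply Qge2_cq; auto. apply (adm_cq Q); auto. apply (adm_cq Q); auto.
  intros k Hk. rewrite <- Hgs by auto. apply Hpre; auto.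
Qed.

Lemma inv_pow_mono a b : / 2 ^ (a + b) <= / 2 ^ a.
Proof.
  apply Rinv_le_contravar. apply pow_lt; lra. rewrite pow_add.
  assert (1 <= 2 ^ b) by (apply pow_R1_Rle; lra). assert (0 < 2 ^ a) by (apply pow_lt; lra). nra.
Qed.

Lemma part2 Q q : Qge2 Q -> (2 <= q)%nat -> (forall n, (1 <= n)%nat -> Q n = q) ->
  forall x, in_dom Q x -> cont_rel (in_dom Q) (fQ Q q) x.
Proof.
  intros H Hq HQq x Hx eps He. exists eps. split; auto. intros y Hy Hxy.
  assert (Hle : forall k, (1 <= k)%nat -> (Q k <= q)%nat) by (intros k Hk; rewrite HQq; auto).
  assert (Hf : forall z, in_dom Q z -> fQ Q q z = z).
  { intros z Hz. rewrite fQ_eq by auto. destruct (chosen_ok Q z H Hz) as [_ Hv].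
    rewrite <- Hv at 2. apply V_extQ. intros k Hk. unfold cq. symmetry. auto. }
  rewrite !Hf by auto. auto.
Qed.

Lemma prefix Q e : Qge2 Q -> admissible Q e ->
  (forall e', admissible Q e' -> V Q e' = V Q e -> forall k, (1 <= k)%nat -> e' k = e k) ->
  forall N, exists delta, 0 < delta /\ forall e'', admissible Q e'' -> Rabs (V Q e'' - V Q e) < delta ->
    forall j, (1 <= j <= N)%nat -> e'' j = e j.
Proof.
  intros H He Huniq N. induction N.
  - exists 1. split. lra. intros; lia.
  - destruct IHN as [delta [Hd Hpre]].
    assert (Ha := INR_ge2 Q (S N) H ltac:(lia)).
    set (d := e (S N)). set (a := INR (Q (S N))) in *.
    set (T1 := T Q e (S N)). set (Tn := T Q e N).
    assert (HTn : a * Tn = - (INR d + T1)) by (apply T_eq; auto).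
    pose proof (T_bounds Q e (S N) H He) as HB1. pose proof (ABs_sum Q (S N) H) as HAB.
    fold T1 in HB1.
    assert (G1 : exists g1, 0 < g1 /\ ((d + 1 < Q (S N))%nat -> a * g1 <= Bs Q (S N) - T1)).
    { destruct (Nat.lt_ge_cases (d + 1) (Q (S N))) as [Hc|Hc]; [|exists 1; split; [lra|intros; lia]].
      exists ((Bs Q (S N) - T1) / a). split; [|intros; apply Req_le; field; lra].
      destruct (Rle_lt_or_eq_dec T1 (Bs Q (S N)) (proj2 HB1)) as [Hlt|Heq].
      apply Rdiv_lt_0_compat; lra.
      exfalso.
      set (e' := fun j => if (j <=? N)%nat then e j else if (j =? S N)%nat then S d else minp (shift Q (S N)) (j - S N)%nat).
      assert (He' : admissible Q e').
      { intros j Hj. unfold e'. destruct (Nat.leb_spec j N). apply He; auto.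
        destruct (Nat.eqb_spec j (S N)). subst; lia.
        pose proof (adm_minp (shift Q (S N)) (Qge2_shift Q (S N) H) (j - S N)%nat ltac:(lia)).
        unfold shift in H1 at 2. replace (S N + (j - S N)%nat)%nat with j in H1 by lia. auto. }
      assert (Hag : forall k, (1 <= k <= N)%nat -> e' k = e k).
      { intros k Hk. unfold e'. destruct (Nat.leb_spec k N); auto; lia. }
      assert (HT' : T Q e' (S N) = - As Q (S N)).
      { apply T_minp. intros j Hj. unfold e'. destruct (Nat.leb_spec (S N + j) N). lia.
        destruct (Nat.eqb_spec (S N + j) (S N)). lia. f_equal. lia. }
      pose proof (T_eq Q e' N H He'). fold a in H0. rewrite HT' in H0.
      assert (e' (S N) = S d) by (unfold e'; destruct (Nat.leb_spec (S N) N); [lia|]; rewrite Nat.eqb_refl; auto).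
      rewrite H1, S_INR in H0.
      assert (T Q e' N = Tn).
      { apply Rmult_eq_reg_l with a; [|lra]. rewrite H0, HTn. rewrite Heq. lra. }
      pose proof (V_diff Q e' e N H He' He ltac:(auto)). fold Tn in H3. rewrite H2 in H3.
      replace (Tn - Tn) with 0 in H3 by ring. unfold Rdiv in H3. rewrite Rmult_0_r, Rmult_0_l in H3.
      apply Rminus_diag_uniq in H3. specialize (Huniq e' He' H3 (S N) ltac:(lia)).
      rewrite H1 in Huniq. unfold d in Huniq. lia. }
    assert (G2 : exists g2, 0 < g2 /\ ((1 <= d)%nat -> a * g2 <= As Q (S N) + T1)).
    { destruct (Nat.lt_ge_cases 0 d) as [Hc|Hc]; [|exists 1; split; [lra|intros; lia]].
      exists ((As Q (S N) + T1) / a). split; [|intros; apply Req_le; field; lra].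
      destruct (Rle_lt_or_eq_dec (- As Q (S N)) T1 (proj1 HB1)) as [Hlt|Heq].
      apply Rdiv_lt_0_compat; lra.
      exfalso.
      set (e' := fun j => if (j <=? N)%nat then e j else if (j =? S N)%nat then pred d else maxp (shift Q (S N)) (j - S N)%nat).
      assert (He' : admissible Q e').
      { intros j Hj. unfold e'. destruct (Nat.leb_spec j N). apply He; auto.
        destruct (Nat.eqb_spec j (S N)). subst. specialize (He (S N) ltac:(lia)). fold d in He. lia.
        pose proof (adm_maxp (shift Q (S N)) (Qge2_shift Q (S N) H) (j - S N)%nat ltac:(lia)).
        unfold shift in H1 at 2. replace (S N + (j - S N)%nat)%nat with j in H1 by lia. auto. }
      assert (HT' : T Q e' (S N) = Bs Q (S N)).
      { apply T_maxp. intros j Hj. unfold e'. destruct (Nat.leb_spec (S N + j) N). lia.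
        destruct (Nat.eqb_spec (S N + j) (S N)). lia. f_equal. lia. }
      pose proof (T_eq Q e' N H He'). fold a in H0. rewrite HT' in H0.
      assert (e' (S N) = pred d) by (unfold e'; destruct (Nat.leb_spec (S N) N); [lia|]; rewrite Nat.eqb_refl; auto).
      rewrite H1 in H0. replace (INR (pred d)) with (INR d - 1) in H0
        by (destruct d; [lia|]; simpl pred; rewrite S_INR; ring).
      assert (T Q e' N = Tn).
      { apply Rmult_eq_reg_l with a; [|lra]. rewrite H0, HTn. rewrite <- Heq. lra. }
      pose proof (V_diff Q e' e N H He' He ltac:(intros k Hk; unfold e'; destruct (Nat.leb_spec k N); auto; lia)).
      fold Tn in H3. rewrite H2 in H3.
      replace (Tn - Tn) with 0 in H3 by ring. unfold Rdiv in H3. rewrite Rmult_0_r, Rmult_0_l in H3.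
      apply Rminus_diag_uniq in H3. specialize (Huniq e' He' H3 (S N) ltac:(lia)).
      rewrite H1 in Huniq. unfold d in Huniq. lia. }
    destruct G1 as [g1 [Hg1 Hg1']]. destruct G2 as [g2 [Hg2 Hg2']].
    assert (HP := Qprod_pos Q N H).
    exists (Rmin delta (Rmin g1 g2 / Qprod Q N)). split.
    { apply Rmin_pos; auto. apply Rdiv_lt_0_compat; auto. apply Rmin_pos; auto. }
    intros e'' He'' Hclose j Hj.
    assert (Hpre' : forall k, (1 <= k <= N)%nat -> e'' k = e k).
    { apply Hpre; auto. eapply Rlt_le_trans; [exact Hclose|apply Rmin_l]. }
    destruct (Nat.eq_dec j (S N)) as [->|Hne]; [|apply Hpre'; lia].
    destruct (Nat.eq_dec (e'' (S N)) d) as [E|Hne]; [exact E|].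
    exfalso.
    assert (Hv := V_diff_abs Q e'' e N H He'' He Hpre').
    fold Tn in Hv.
    pose proof (T_eq Q e'' N H He''). fold a in H0.
    pose proof (T_bounds Q e'' (S N) H He'').
    assert (HD : Rmin g1 g2 <= Rabs (T Q e'' N - Tn)).
    { destruct (Nat.lt_ge_cases d (e'' (S N))) as [Hlt|Hge].
      - assert (Hc : (d + 1 < Q (S N))%nat) by (specialize (He'' (S N) ltac:(lia)); lia).
        specialize (Hg1' Hc).
        assert (INR d + 1 <= INR (e'' (S N))) by (rewrite <- S_INR; apply le_INR; lia).
        assert (a * g1 <= a * (Tn - T Q e'' N)) by lra.
        apply Rmult_le_reg_l in H3; [|lra].
        rewrite Rabs_minus_sym. rewrite Rabs_right by lra. eapply Rle_trans; [apply Rmin_l|lra].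
      - assert (Hc : (1 <= d)%nat) by lia. specialize (Hg2' Hc).
        assert (INR (e'' (S N)) + 1 <= INR d) by (rewrite <- S_INR; apply le_INR; lia).
        assert (a * g2 <= a * (T Q e'' N - Tn)) by lra.
        apply Rmult_le_reg_l in H3; [|lra].
        rewrite Rabs_right by lra. eapply Rle_trans; [apply Rmin_r|lra]. }
    assert (Rmin g1 g2 / Qprod Q N <= Rabs (V Q e'' - V Q e)).
    { rewrite Hv. unfold Rdiv. apply Rmult_le_compat_r; auto. apply Rlt_le, Rinv_0_lt_compat; auto. }
    pose proof (Rmin_r delta (Rmin g1 g2 / Qprod Q N)). lra.
Qed.


Lemma part1 Q q : Qge2 Q -> (2 <= q)%nat -> (forall k, (1 <= k)%nat -> (Q k <= q)%nat) ->
  forall x, in_dom Q x -> ~ negaQ_rational Q x -> cont_rel (in_dom Q) (fQ Q q) x.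
Proof.
  intros H Hq Hle x Hx Hnr.
  destruct (chosen_ok Q x H Hx) as [Ha Hv]. set (e := chosen_repr Q x) in *.
  assert (Huniq : forall e', admissible Q e' -> V Q e' = V Q e -> forall k, (1 <= k)%nat -> e' k = e k).
  { intros e' He' Hve k Hk. destruct (Nat.eq_dec (e' k) (e k)) as [E|E]; auto. exfalso. apply Hnr.
    exists e', e. split; [apply repr_iff; auto; split; auto; congruence|].
    split; [apply repr_iff; auto|]. exists k. auto. }
  intros eps Heps. destruct (small_pow eps Heps) as [N HN].
  destruct (prefix Q e H Ha Huniq N) as [delta [Hd Hpre]].
  exists delta. split; auto. intros y Hy Hxy.
  destruct (chosen_ok Q y H Hy) as [Hc Hcv].
  rewrite (fQ_eq Q q y), (fQ_eq Q q x) by auto. fold e.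
  eapply Rle_lt_trans; [|exact HN].
  apply CLOSE. apply Qge2_cq; auto. apply (adm_cq Q); auto. apply (adm_cq Q); auto.
  apply Hpre; auto. rewrite Hcv, Hv. auto.
Qed.


Lemma STR Q' q j : Qge2 Q' -> (2 <= q)%nat -> (forall k, (1 <= k)%nat -> (Q' k <= q)%nat) ->
  (1 <= j)%nat -> (Q' j < q)%nat -> V (cq q) (maxp Q') - V (cq q) (minp Q') < 1.
Proof.
  intros H Hq Hle Hj Hlt.
  pose proof (AB_sum (cq q) (Qge2_cq q Hq)) as HAB. unfold Av, Bv in HAB.
  assert (Hc := Qge2_cq q Hq).
  assert (Hmax : admissible (cq q) (maxp Q')) by (apply (adm_cq Q'); auto using adm_maxp).
  assert (Hmin : admissible (cq q) (minp Q')) by (apply (adm_cq Q'); auto using adm_minp).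
  pose proof (V_le_B (cq q) (maxp Q') Hc Hmax). pose proof (V_ge_A (cq q) (minp Q') Hc Hmin).
  unfold Av, Bv in *.
  assert (HP := Qprod_pos (cq q) j Hc).
  assert (Hi : INR (Q' j - 1) < INR (cq q j - 1)) by (apply lt_INR; unfold cq; specialize (H j Hj); lia).
  assert (0 < / Qprod (cq q) j) by (apply Rinv_0_lt_compat; auto).
  destruct (Nat.even j) eqn:E.
  - assert (V (cq q) (maxp Q') < V (cq q) (maxp (cq q))).
    { unfold V. apply (Series_lt_gen _ _ (pred j)); try apply ex_V; auto using adm_maxp.
      intros k. apply term_le_max; auto.
      replace (S (pred j)) with j by lia. unfold negaQ_term, maxp. rewrite E. rewrite neg1_even by auto.
      unfold Rdiv. rewrite !Rmult_1_l. apply Rmult_lt_compat_r; auto. }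
    lra.
  - assert (V (cq q) (minp (cq q)) < V (cq q) (minp Q')).
    { unfold V. apply (Series_lt_gen _ _ (pred j)); try apply ex_V; auto using adm_minp.
      intros k. apply term_ge_min; auto.
      replace (S (pred j)) with j by lia. unfold negaQ_term, minp. rewrite E. rewrite neg1_odd by auto.
      unfold Rdiv. apply Rmult_lt_compat_r; auto. lra. }
    lra.
Qed.

Section P3.
Variables (Q : nat -> nat) (q : nat) (e : nat -> nat) (m : nat).
Hypothesis HQ : Qge2 Q.
Hypothesis Hq : (2 <= q)%nat.
Hypothesis Hle : forall k, (1 <= k)%nat -> (Q k <= q)%nat.
Hypothesis Hm : (1 <= m)%nat.
Hypothesis Hek : forall k, (1 <= k <= m)%nat -> (e k < Q k)%nat.
Hypothesis Hem : (1 <= e m)%nat.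

Definition FF := first_form_seq Q e m.
Definition SS := fun k => if (k <=? m)%nat then (if (k =? m)%nat then (e m - 1)%nat else e k)
  else (if Nat.odd (k - m) then 0%nat else (Q k - 1)%nat).

Lemma FF_adm : admissible Q FF.
Proof.
  intros k Hk. unfold FF, first_form_seq. destruct (Nat.leb_spec k m). apply Hek; lia.
  specialize (HQ k Hk). destruct (Nat.odd (k - m)); lia.
Qed.

Lemma SS_adm : admissible Q SS.
Proof.
  intros k Hk. unfold SS. destruct (Nat.leb_spec k m).
  destruct (Nat.eqb_spec k m). subst. specialize (Hek m ltac:(lia)). lia. apply Hek; lia.
  specialize (HQ k Hk). destruct (Nat.odd (k - m)); lia.
Qed.

Lemma FF_tail j : (1 <= j)%nat -> FF (m + j)%nat = minp (shift Q m) j.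
Proof.
  intros Hj. unfold FF, first_form_seq, minp, shift. destruct (Nat.leb_spec (m + j) m). lia.
  replace (m + j - m)%nat with j by lia. rewrite <- Nat.negb_even. destruct (Nat.even j); reflexivity.
Qed.

Lemma SS_tail j : (1 <= j)%nat -> SS (m + j)%nat = maxp (shift Q m) j.
Proof.
  intros Hj. unfold SS, maxp, shift. destruct (Nat.leb_spec (m + j) m). lia.
  replace (m + j - m)%nat with j by lia. rewrite <- Nat.negb_even. destruct (Nat.even j); reflexivity.
Qed.

Lemma FS_agree k : (1 <= k <= pred m)%nat -> FF k = SS k.
Proof.
  intros Hk. unfold FF, SS, first_form_seq. destruct (Nat.leb_spec k m); [|lia].
  destruct (Nat.eqb_spec k m); [lia|auto].
Qed.

Lemma FF_m : FF m = e m.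
Proof. unfold FF, first_form_seq. rewrite Nat.leb_refl. auto. Qed.
Lemma SS_m : SS m = (e m - 1)%nat.
Proof. unfold SS. rewrite Nat.leb_refl, Nat.eqb_refl. auto. Qed.

Lemma V_FS : V Q FF = V Q SS.
Proof.
  assert (Hm' : exists m', m = S m') by (exists (pred m); lia). destruct Hm' as [m' Em].
  assert (Hd := V_diff Q FF SS m' HQ FF_adm SS_adm ltac:(intros; apply FS_agree; rewrite Em; simpl; lia)).
  assert (T Q FF m' = T Q SS m').
  { pose proof (T_eq Q FF m' HQ FF_adm). pose proof (T_eq Q SS m' HQ SS_adm).
    rewrite <- Em in H, H0.
    rewrite FF_m in H. rewrite SS_m in H0.
    rewrite (T_minp Q FF m) in H by (intros; apply FF_tail; auto).
    rewrite (T_maxp Q SS m) in H0 by (intros; apply SS_tail; auto).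
    rewrite minus_INR in H0 by lia. simpl (INR 1) in H0.
    pose proof (ABs_sum Q m HQ).
    assert (Ha := INR_ge2 Q m HQ ltac:(lia)).
    apply Rmult_eq_reg_l with (INR (Q m)); lra. }
  rewrite H in Hd. replace (T Q SS m' - T Q SS m') with 0 in Hd by ring.
  unfold Rdiv in Hd. rewrite Rmult_0_r, Rmult_0_l in Hd. lra.
Qed.

Lemma Lq_neq : (exists n, (m < n)%nat /\ (Q n < q)%nat) -> V (cq q) FF <> V (cq q) SS.
Proof.
  intros [n [Hn1 Hn2]] Heq.
  assert (Hc := Qge2_cq q Hq).
  assert (HF := adm_cq Q q FF Hle FF_adm). assert (HS := adm_cq Q q SS Hle SS_adm).
  assert (Hm' : exists m', m = S m') by (exists (pred m); lia). destruct Hm' as [m' Em].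
  assert (Hd := V_diff (cq q) FF SS m' Hc HF HS ltac:(intros; apply FS_agree; rewrite Em; simpl; lia)).
  rewrite Heq in Hd. rewrite Rminus_diag_eq in Hd by auto.
  assert (HP := Qprod_pos (cq q) m' Hc). assert ((-1) ^ m' <> 0) by (apply pow_nonzero; lra).
  assert (HTT : T (cq q) FF m' = T (cq q) SS m').
  { symmetry in Hd. unfold Rdiv in Hd. apply Rmult_integral in Hd. destruct Hd as [H0|H0].
    apply Rmult_integral in H0. destruct H0; [contradiction|lra].
    exfalso. apply Rinv_neq_0_compat in H0; auto. lra. }
  pose proof (T_eq (cq q) FF m' Hc HF). pose proof (T_eq (cq q) SS m' Hc HS).
  rewrite HTT in H0. rewrite H0 in H1. rewrite <- Em in H1.
  rewrite FF_m in H1. rewrite SS_m in H1. rewrite minus_INR in H1 by lia. simpl (INR 1) in H1.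
  assert (E1 : T (cq q) FF m = V (cq q) (minp (shift Q m))).
  { unfold T. change (shift (cq q) m) with (cq q). apply V_ext. intros k Hk.
    unfold shift at 1. apply FF_tail; auto. }
  assert (E2 : T (cq q) SS m = V (cq q) (maxp (shift Q m))).
  { unfold T. change (shift (cq q) m) with (cq q). apply V_ext. intros k Hk.
    unfold shift at 1. apply SS_tail; auto. }
  pose proof (STR (shift Q m) q (n - m) (Qge2_shift Q m HQ) Hq
    ltac:(intros k Hk; unfold shift; apply Hle; lia) ltac:(lia)
    ltac:(unfold shift; replace (m + (n - m))%nat with n by lia; auto)).
  lra.
Qed.

End P3.


Lemma part3 Q q : Qge2 Q -> (2 <= q)%nat -> (forall k, (1 <= k)%nat -> (Q k <= q)%nat) ->
  forall (e : nat -> nat) (m : nat),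
     (1 <= m)%nat ->
     (forall k, (1 <= k <= m)%nat -> (e k < Q k)%nat) ->
     (1 <= e m)%nat ->
     (exists n, (m < n)%nat /\ (Q n < q)%nat) ->
     ~ cont_rel (in_dom Q) (fQ Q q) (negaQ_value Q (first_form_seq Q e m)).
Proof.
  intros H Hq Hle e m Hm Hek Hem Hn Hcont.
  assert (HF := FF_adm Q q e m H Hq Hm Hek Hem). assert (HS := SS_adm Q q e m H Hq Hm Hek Hem).
  change (first_form_seq Q e m) with (FF Q e m) in Hcont.
  rewrite negaQ_value_eq in Hcont by auto.
  pose proof (Lq_neq Q q e m H Hq Hle Hm Hek Hem Hn) as Hneq.
  pose proof (V_FS Q q e m H Hq Hm Hek Hem) as HFS.
  set (Lq := V (cq q) (FF Q e m)) in *. set (Lq' := V (cq q) (SS Q e m)) in *.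
  assert (HD : 0 < Rabs (Lq - Lq')) by (apply Rabs_pos_lt; intros E; apply Hneq; lra).
  set (D := Rabs (Lq - Lq')) in *.
  destruct (Hcont (D / 4) ltac:(lra)) as [delta [Hd Hc]].
  destruct (small_pow (Rmin delta (D / 4))) as [n0 Hn0]. apply Rmin_pos; lra.
  set (N := (n0 + m)%nat).
  assert (Hh : / 2 ^ N < Rmin delta (D / 4)) by (eapply Rle_lt_trans; [apply inv_pow_mono|exact Hn0]).
  pose proof (Rmin_l delta (D / 4)). pose proof (Rmin_r delta (D / 4)).
  destruct (SIDE Q q (FF Q e m) N H Hq Hle HF) as [A1 A2].
  destruct (SIDE Q q (SS Q e m) N H Hq Hle HS) as [B1 B2].
  rewrite <- HFS in B1.
  assert (C1 := Hc (V Q (trunc (FF Q e m) N)) (V_in_dom Q _ H (trunc_adm Q _ N H HF)) ltac:(lra)).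
  assert (C2 := Hc (V Q (trunc (SS Q e m) N)) (V_in_dom Q _ H (trunc_adm Q _ N H HS)) ltac:(lra)).
  apply abs_le_inv in A2. apply abs_le_inv in B2.
  apply Rabs_def2 in C1. apply Rabs_def2 in C2.
  assert (HDdef : D = Rabs (Lq - Lq')) by reflexivity.
  assert (Rabs (Lq - Lq') <= 2 * / 2 ^ N + 2 * (D / 4)).
  { apply Rabs_le. unfold Lq, Lq'. lra. }
  Show.
  lra.
Qed.

Theorem theorem3 (Q : nat -> nat) (q : nat)
  (Hq : (2 <= q)%nat)
  (HQ : forall k, (1 <= k)%nat -> (2 <= Q k)%nat /\ (Q k <= q)%nat) :
  (forall x, in_dom Q x -> ~ negaQ_rational Q x ->
     cont_rel (in_dom Q) (fQ Q q) x) /\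
  ((forall n, (1 <= n)%nat -> Q n = q) ->
     forall x, in_dom Q x -> cont_rel (in_dom Q) (fQ Q q) x) /\
  (forall (e : nat -> nat) (m : nat),
     (1 <= m)%nat ->
     (forall k, (1 <= k <= m)%nat -> (e k < Q k)%nat) ->
     (1 <= e m)%nat ->
     (exists n, (m < n)%nat /\ (Q n < q)%nat) ->
     ~ cont_rel (in_dom Q) (fQ Q q) (negaQ_value Q (first_form_seq Q e m))).
Proof.
  assert (H : Qge2 Q) by (intros k Hk; apply HQ; auto).
  assert (Hle : forall k, (1 <= k)%nat -> (Q k <= q)%nat) by (intros k Hk; apply HQ; auto).
  split; [|split].
  - apply part1; auto.
  - intros. apply part2; auto.
  - apply part3; auto.
Qed.
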